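(* Let $Y,\widehat{Y},A$ be $\{0,1\}$-valued random variables on a common probability space with $\Pr\{A=a,Y=y\}>0$ for all $a,y$, and let $\ell:\{0,1\}^2\to\mathbb{R}$ be a loss function. Consider the optimization problem $$\min_{\widetilde{Y}}\ \mathbb{E}\,\ell(\widetilde{Y},Y)\quad\text{s.t.}\quad \gamma_a(\widetilde{Y})\in P_a(\widehat{Y})\ \text{for all } a\in\{0,1\},\qquad \gamma_0(\widetilde{Y})=\gamma_1(\widetilde{Y}),$$ where $\widetilde{Y}$ ranges over predictors derived from $(\widehat{Y},A)$, parametrized by the four numbers $\Pr\{\widetilde{Y}=1\mid\widehat{Y}=\hat y,A=a\}\in[0,1]$. This problem is a linear program in these four variables whose coefficients can be computed from the joint distribution of $(\widehat{Y},A,Y)$. Moreover, its solution is an optimal equalized odds predictor derived from $\widehat{Y}$ and $A$, i.e. it minimizes $\mathbb{E}\,\ell(\widetilde{Y},Y)$ among all predictors derived from $(\widehat{Y},A)$ that satisfy equalized odds.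
   Context: For a $\{0,1\}$-valued predictor $Z$ and $a\in\{0,1\}$, $\gamma_a(Z)=\left(\Pr\{Z=1\mid A=a,Y=0\},\ \Pr\{Z=1\mid A=a,Y=1\}\right)$, and $P_a(\widehat{Y})=\mathrm{convhull}\{(0,0),\gamma_a(\widehat{Y}),\gamma_a(1-\widehat{Y}),(1,1)\}$. A predictor is derived from $(\widehat{Y},A)$ if it is a possibly randomized function of $(\widehat{Y},A)$ alone (randomness independent of everything else). A predictor $\widetilde{Y}$ satisfies equalized odds (with respect to $A$ and $Y$) if $\widetilde{Y}$ and $A$ are independent conditional on $Y$; for binary variables this is equivalent to $\gamma_0(\widetilde{Y})=\gamma_1(\widetilde{Y})$. *)

(* Defs.v *)
From mathcomp Require Import all_boot all_order all_algebra.
Set Implicit Arguments. Unset Strict Implicit. Unset Printing Implicit Defensive.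
Import Order.TTheory GRing.Theory Num.Theory.
Local Open Scope ring_scope.

Section Defs.
Variable R : realFieldType.

Definition is_pmf (S : finType) (mu : S -> R) : Prop :=
  (forall s, 0 <= mu s) /\ \sum_s mu s = 1.

Definition pr (S : finType) (mu : S -> R) (E : pred S) : R :=
  \sum_(s | E s) mu s.

Definition cpr (S : finType) (mu : S -> R) (E F : pred S) : R :=
  pr mu [pred s | E s && F s] / pr mu F.

Definition gamma (S : finType) (mu : S -> R) (A Y Z : S -> bool) (a : bool)
  : R * R :=
  (cpr mu [pred s | Z s] [pred s | (A s == a) && (Y s == false)],
   cpr mu [pred s | Z s] [pred s | (A s == a) && (Y s == true)]).

(* convex hull of the four points (0,0), p1, p2, (1,1) in R^2 *)
Definition convhull4 (p1 p2 : R * R) (x : R * R) : Prop :=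
  exists l0 l1 l2 l3 : R,
    [/\ 0 <= l0, 0 <= l1, 0 <= l2, 0 <= l3 & l0 + l1 + l2 + l3 = 1] /\
    x = (l1 * p1.1 + l2 * p2.1 + l3, l1 * p1.2 + l2 * p2.2 + l3).

Definition Pa (S : finType) (mu : S -> R) (A Y Yh : S -> bool) (a : bool)
  : R * R -> Prop :=
  convhull4 (gamma mu A Y Yh a) (gamma mu A Y (fun s => ~~ Yh s) a).

(* A predictor derived from (Yhat, A) with parameters
   q yh a = Pr{Ytilde = 1 | Yhat = yh, A = a}: the sample space is extended
   by an independent coin, Ytilde is the second component. *)
Definition derived_mass (S : finType) (mu : S -> R) (Yh A : S -> bool)
  (q : bool -> bool -> R) : S * bool -> R :=
  fun sb => mu sb.1 * (if sb.2 then q (Yh sb.1) (A sb.1)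
                       else 1 - q (Yh sb.1) (A sb.1)).

Definition Ytilde (S : finType) : S * bool -> bool := fun sb => sb.2.
Definition lift_fst (S : finType) (X : S -> bool) : S * bool -> bool :=
  fun sb => X sb.1.

Definition exp_loss (S : finType) (mu : S -> R) (l : bool -> bool -> R)
  (Z Y : S -> bool) : R :=
  \sum_s mu s * l (Z s) (Y s).

(* Equalized odds: Z and A are independent conditionally on Y:
   Pr{Z=t, A=a | Y=y} = Pr{Z=t | Y=y} Pr{A=a | Y=y} for all t, a, y
   (written multiplied through by Pr{Y=y}^2). *)
Definition eq_odds (S : finType) (mu : S -> R) (A Y Z : S -> bool) : Prop :=
  forall t a y : bool,
    pr mu [pred s | [&& Z s == t, A s == a & Y s == y]] *
      pr mu [pred s | Y s == y]
    = pr mu [pred s | (Z s == t) && (Y s == y)] *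
      pr mu [pred s | (A s == a) && (Y s == y)].

Definition param_ok (q : bool -> bool -> R) : Prop :=
  forall yh a, 0 <= q yh a <= 1.

Definition derived_loss (S : finType) (mu : S -> R) (Yh A Y : S -> bool)
  (l : bool -> bool -> R) (q : bool -> bool -> R) : R :=
  exp_loss (derived_mass mu Yh A q) l (@Ytilde S) (lift_fst Y).

Definition derived_gamma (S : finType) (mu : S -> R) (Yh A Y : S -> bool)
  (q : bool -> bool -> R) (a : bool) : R * R :=
  gamma (derived_mass mu Yh A q) (lift_fst A) (lift_fst Y) (@Ytilde S) a.

Definition feasible (S : finType) (mu : S -> R) (Yh A Y : S -> bool)
  (q : bool -> bool -> R) : Prop :=
  [/\ param_ok q,
      (forall a, Pa mu A Y Yh a (derived_gamma mu Yh A Y q a)) &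
      derived_gamma mu Yh A Y q false = derived_gamma mu Yh A Y q true].

Definition solves (S : finType) (mu : S -> R) (Yh A Y : S -> bool)
  (l : bool -> bool -> R) (q : bool -> bool -> R) : Prop :=
  feasible mu Yh A Y q /\
  forall q', feasible mu Yh A Y q' ->
    derived_loss mu Yh A Y l q <= derived_loss mu Yh A Y l q'.

Definition joint (S : finType) (mu : S -> R) (Yh A Y : S -> bool)
  (yh a y : bool) : R :=
  pr mu [pred s | [&& Yh s == yh, A s == a & Y s == y]].

End Defs.

(* Main.v *)
Require Import Defs.
From mathcomp Require Import all_boot all_order all_algebra.
Import Order.TTheory GRing.Theory Num.Theory.
Local Open Scope ring_scope.
From mathcomp Require Import ring lra.


Section H.
Variables (R : realFieldType) (S : finType) (mu : S -> R) (Yh A Y : S -> bool).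

Lemma sum_joint (f : bool -> bool -> bool -> R) :
  \sum_s mu s * f (Yh s) (A s) (Y s) =
  \sum_(yh : bool) \sum_(a : bool) \sum_(y : bool) joint mu Yh A Y yh a y * f yh a y.
Proof.
rewrite /joint /pr !big_bool /=.
rewrite !big_distrl /= !(big_mkcond (fun s => [&& _, _ & _])) /=.
rewrite -!big_split /=; apply: eq_bigr => s _.
by case: (Yh s); case: (A s); case: (Y s) => /=; ring.
Qed.

Lemma sum_pair (F : S * bool -> R) :
  \sum_p F p = \sum_s (F (s, true) + F (s, false)).
Proof.
transitivity (\sum_s \sum_(b : bool) F (s, b)); last first.
  by apply: eq_bigr => s _; rewrite big_bool.
symmetry; etransitivity; first exact: (pair_big xpredT xpredT (fun s b => F (s, b))).
by apply: eq_bigr => -[].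
Qed.

Lemma pr_dm q (P : pred (S * bool)) :
  pr (derived_mass mu Yh A q) P = \sum_s mu s *
   ((P (s, true))%:R * q (Yh s) (A s) + (P (s, false))%:R * (1 - q (Yh s) (A s))).
Proof.
rewrite /pr big_mkcond /=.
rewrite sum_pair.
apply: eq_bigr => s _; rewrite /derived_mass /=.
by case: (P (s, true)); case: (P (s, false)) => /=; ring.
Qed.

Lemma pr_dm_AY q (Pb : bool -> bool -> bool -> bool) :
  pr (derived_mass mu Yh A q) [pred sb | Pb sb.2 (A sb.1) (Y sb.1)] =
  \sum_(yh : bool) \sum_(a : bool) \sum_(y : bool) joint mu Yh A Y yh a y *
    ((Pb true a y)%:R * q yh a + (Pb false a y)%:R * (1 - q yh a)).
Proof.
rewrite pr_dm.
exact: (sum_joint (fun yh a y => (Pb true a y)%:R * q yh a + (Pb false a y)%:R * (1 - q yh a))).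
Qed.

Lemma pr_mu (Pm : bool -> bool -> bool -> bool) :
  pr mu [pred s | Pm (Yh s) (A s) (Y s)] =
  \sum_(yh : bool) \sum_(a : bool) \sum_(y : bool) joint mu Yh A Y yh a y * (Pm yh a y)%:R.
Proof.
rewrite -(sum_joint (fun yh a y => (Pm yh a y)%:R)) /pr big_mkcond /=.
by apply: eq_bigr => s _; case: (Pm _ _ _) => /=; ring.
Qed.

Lemma loss_dm q l :
  derived_loss mu Yh A Y l q =
  \sum_(yh : bool) \sum_(a : bool) \sum_(y : bool) joint mu Yh A Y yh a y *
    (q yh a * l true y + (1 - q yh a) * l false y).
Proof.
rewrite -(sum_joint (fun yh a y => q yh a * l true y + (1 - q yh a) * l false y)).
rewrite /derived_loss /exp_loss.
rewrite sum_pair.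
by apply: eq_bigr => s _; rewrite /derived_mass /Ytilde /lift_fst /=; ring.
Qed.

Lemma gamma_dm q a :
  derived_gamma mu Yh A Y q a =
  ((joint mu Yh A Y true a false * q true a + joint mu Yh A Y false a false * q false a)
     / (joint mu Yh A Y true a false + joint mu Yh A Y false a false),
   (joint mu Yh A Y true a true * q true a + joint mu Yh A Y false a true * q false a)
     / (joint mu Yh A Y true a true + joint mu Yh A Y false a true)).
Proof.
rewrite /derived_gamma /gamma /cpr; congr pair; congr (_ / _).
- etransitivity; first exact: (pr_dm_AY q (fun b a' y' => b && ((a' == a) && (y' == false)))).
  by rewrite !big_bool /=; case: a => /=; ring.
- etransitivity; first exact: (pr_dm_AY q (fun b a' y' => ((a' == a) && (y' == false)))).
  by rewrite !big_bool /=; case: a => /=; ring.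
- etransitivity; first exact: (pr_dm_AY q (fun b a' y' => b && ((a' == a) && (y' == true)))).
  by rewrite !big_bool /=; case: a => /=; ring.
- etransitivity; first exact: (pr_dm_AY q (fun b a' y' => ((a' == a) && (y' == true)))).
  by rewrite !big_bool /=; case: a => /=; ring.
Qed.

Lemma posM a y : 0 < pr mu [pred s | (A s == a) && (Y s == y)] ->
  0 < joint mu Yh A Y true a y + joint mu Yh A Y false a y.
Proof.
have -> : pr mu [pred s | (A s == a) && (Y s == y)] =
  \sum_(yh : bool) \sum_(a' : bool) \sum_(y' : bool) joint mu Yh A Y yh a' y' *
     ((a' == a) && (y' == y))%:R := pr_mu (fun yh a' y' => (a' == a) && (y' == y)).
by rewrite !big_bool /=; case: a; case: y => /=; rewrite !(mulr1, mulr0, addr0, add0r).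
Qed.

Lemma eq_odds_dm q :
  eq_odds (derived_mass mu Yh A q) (lift_fst A) (lift_fst Y) (@Ytilde S) <->
  (forall y, (joint mu Yh A Y true false y * q true false + joint mu Yh A Y false false y * q false false)
             * (joint mu Yh A Y true true y + joint mu Yh A Y false true y)
           = (joint mu Yh A Y true true y * q true true + joint mu Yh A Y false true y * q false true)
             * (joint mu Yh A Y true false y + joint mu Yh A Y false false y)).
Proof.
pose dm := derived_mass mu Yh A q.
have E1 : forall t a y, pr dm [pred s | [&& Ytilde s == t, lift_fst A s == a & lift_fst Y s == y]]
  = \sum_(yh : bool) \sum_(a' : bool) \sum_(y' : bool) joint mu Yh A Y yh a' y' *
    (([&& true == t, a' == a & y' == y])%:R * q yh a' + ([&& false == t, a' == a & y' == y])%:R * (1 - q yh a'))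
  := fun t a y => pr_dm_AY q (fun b a' y' => [&& b == t, a' == a & y' == y]).
have E2 : forall y, pr dm [pred s | lift_fst Y s == y]
  = \sum_(yh : bool) \sum_(a' : bool) \sum_(y' : bool) joint mu Yh A Y yh a' y' *
    ((y' == y)%:R * q yh a' + (y' == y)%:R * (1 - q yh a'))
  := fun y => pr_dm_AY q (fun b a' y' => y' == y).
have E3 : forall t y, pr dm [pred s | (Ytilde s == t) && (lift_fst Y s == y)]
  = \sum_(yh : bool) \sum_(a' : bool) \sum_(y' : bool) joint mu Yh A Y yh a' y' *
    (((true == t) && (y' == y))%:R * q yh a' + ((false == t) && (y' == y))%:R * (1 - q yh a'))
  := fun t y => pr_dm_AY q (fun b a' y' => (b == t) && (y' == y)).
have E4 : forall a y, pr dm [pred s | (lift_fst A s == a) && (lift_fst Y s == y)]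
  = \sum_(yh : bool) \sum_(a' : bool) \sum_(y' : bool) joint mu Yh A Y yh a' y' *
    (((a' == a) && (y' == y))%:R * q yh a' + ((a' == a) && (y' == y))%:R * (1 - q yh a'))
  := fun a y => pr_dm_AY q (fun b a' y' => (a' == a) && (y' == y)).
rewrite /eq_odds -/dm; split => H.
- move=> y; have := H true false y; rewrite E1 E2 E3 E4 !big_bool /=.
  by case: y => /=; rewrite ?(mulr1, mulr0, mul1r, mul0r, addr0, add0r) => H'; lra.
- move=> t a y; have := H y; rewrite E1 E2 E3 E4 !big_bool /=.
  by case: t; case: a; case: y => /=; rewrite ?(mulr1, mulr0, mul1r, mul0r, addr0, add0r) => H'; lra.
Qed.

Lemma Pa_dm q a :
  (forall y, 0 < joint mu Yh A Y true a y + joint mu Yh A Y false a y) -> param_ok q ->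
  Pa mu A Y Yh a (derived_gamma mu Yh A Y q a).
Proof.
move=> Mp qok.
have G : forall (b : bool) y, cpr mu [pred s | (if b then Yh s else ~~ Yh s)] [pred s | (A s == a) && (Y s == y)]
  = joint mu Yh A Y b a y / (joint mu Yh A Y true a y + joint mu Yh A Y false a y).
  clear Mp; move=> b y; rewrite /cpr; congr (_ / _).
  - etransitivity; first exact: (pr_mu (fun yh a' y' => (if b then yh else ~~ yh) && ((a' == a) && (y' == y)))).
    by rewrite !big_bool /=; case: b; case: a; case: y => /=; rewrite !(mulr1, mulr0, addr0, add0r).
  - etransitivity; first exact: (pr_mu (fun yh a' y' => ((a' == a) && (y' == y)))).
    by rewrite !big_bool /=; case: a; case: y => /=; rewrite !(mulr1, mulr0, addr0, add0r).
rewrite /Pa /gamma (G true false) (G true true) (G false false) (G false true) gamma_dm.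
have M0 := Mp false; have M1 := Mp true.
move: M0 M1 (qok true a) (qok false a); clear Mp G qok.
move: (joint mu Yh A Y true a false) (joint mu Yh A Y false a false)
  (joint mu Yh A Y true a true) (joint mu Yh A Y false a true) (q true a) (q false a).
move=> a0 b0 a1 b1 q1 q0 M0 M1 /andP[q1a q1b] /andP[q0a q0b].
have n0 : a0 + b0 != 0 by rewrite gt_eqF.
have n1 : a1 + b1 != 0 by rewrite gt_eqF.
rewrite /convhull4 /=.
case: (lerP q0 q1) => hq.
- exists (1 - q1), (q1 - q0), 0, q0; split; first by split; lra.
  by congr pair; field.
- exists (1 - q0), 0, (q0 - q1), q1; split; first by split; lra.
  by congr pair; field.
Qed.

End H.

Lemma cross1 (R : realFieldType) (x z m n : R) : m != 0 -> n != 0 -> x / m = z / n -> x * n = z * m.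
Proof.
move=> hm hn e; transitivity (x / m * (m * n)); first by field.
by rewrite e; field.
Qed.

Lemma cross2 (R : realFieldType) (x z m n : R) : m != 0 -> n != 0 -> x * n = z * m -> x / m = z / n.
Proof.
move=> hm hn e; transitivity (x * n / (m * n)).
  by field; apply/andP; split.
by rewrite e; field; apply/andP; split.
Qed.


Theorem proposition4p4 (R : realFieldType) :
  (* (i) the problem is a linear program in the four parameters q yh a:
     the objective and gamma_a(Ytilde) are affine in q, with coefficients
     given by fixed functions of the joint distribution of (Yhat, A, Y)
     (and of the loss) *)
  (exists (c0 : (bool -> bool -> bool -> R) -> (bool -> bool -> R) -> R)
          (c : (bool -> bool -> bool -> R) -> (bool -> bool -> R) ->
               bool -> bool -> R)
          (d : (bool -> bool -> bool -> R) -> bool -> bool -> bool -> R),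
     forall (S : finType) (mu : S -> R) (Y Yh A : S -> bool)
            (l : bool -> bool -> R),
       is_pmf mu ->
       (forall a y : bool, 0 < pr mu [pred s | (A s == a) && (Y s == y)]) ->
       forall q : bool -> bool -> R,
         derived_loss mu Yh A Y l q
           = c0 (joint mu Yh A Y) l + (\sum_(yh : bool) \sum_(a : bool)
                                    c (joint mu Yh A Y) l yh a * q yh a) /\
         forall a : bool,
           derived_gamma mu Yh A Y q a
             = ((\sum_(yh : bool) d (joint mu Yh A Y) a false yh * q yh a),
                (\sum_(yh : bool) d (joint mu Yh A Y) a true yh * q yh a))) /\
  (* (ii) any solution is an optimal equalized odds derived predictor *)
  (forall (S : finType) (mu : S -> R) (Y Yh A : S -> bool)
          (l : bool -> bool -> R),
     is_pmf mu ->
     (forall a y : bool, 0 < pr mu [pred s | (A s == a) && (Y s == y)]) ->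
     forall q : bool -> bool -> R,
       solves mu Yh A Y l q ->
       param_ok q /\
       eq_odds (derived_mass mu Yh A q) (lift_fst A) (lift_fst Y) (@Ytilde S) /\
       forall q' : bool -> bool -> R, param_ok q' ->
         eq_odds (derived_mass mu Yh A q') (lift_fst A) (lift_fst Y) (@Ytilde S) ->
         derived_loss mu Yh A Y l q <= derived_loss mu Yh A Y l q').
Proof.
split.
  exists (fun J l => \sum_(yh : bool) \sum_(a : bool) \sum_(y : bool) J yh a y * l false y),
         (fun J l yh a => \sum_(y : bool) J yh a y * (l true y - l false y)),
         (fun J a y yh => J yh a y / (J true a y + J false a y)).
  move=> S mu Y Yh A l _ _ q; split.
    by rewrite loss_dm !big_bool /=; ring.
  by move=> a; rewrite gamma_dm !big_bool /=; congr pair; ring.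
move=> S mu Y Yh A l _ pos q [[pok Pq geq] opt].
have Mp : forall a y, 0 < joint mu Yh A Y true a y + joint mu Yh A Y false a y.
  by move=> a y; apply: posM; apply: pos.
have Mn : forall a y, joint mu Yh A Y true a y + joint mu Yh A Y false a y != 0.
  by move=> a y; rewrite gt_eqF.
split => //; split.
  apply/eq_odds_dm => y.
  move: geq; rewrite !gamma_dm => -[g0 g1].
  by case: y; [exact: (@cross1 _ _ _ _ _ (Mn _ _) (Mn _ _) g1) | exact: (@cross1 _ _ _ _ _ (Mn _ _) (Mn _ _) g0)].
move=> q' pq' eq'; apply: opt; split => //.
  by move=> a; apply: Pa_dm => // y; exact: Mp.
have H := (@eq_odds_dm _ _ mu Yh A Y q').1 eq'.
rewrite !gamma_dm; congr pair; apply: cross2 => //; exact: H.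
Qed.
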